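(* Let $\tau\in\mathcal S_0^+$ and $x,y\in[0,\infty)$. Then $$\tau(x)+\tau(y)\ \le\ \tau(|x-y|)+2y\,\tau'(x).$$
   Context: $\mathcal S_0^+$ is the set of nondecreasing convex $\tau:[0,\infty)\to\mathbb R$, differentiable on $(0,\infty)$ with concave derivative $\tau'$, where $\tau'(0):=\lim_{x\searrow0}\tau'(x)$, such that $\tau(0)=0$ and $\tau'(x)>0$ for all $x>0$. *)

(* Defs.v *)
From Stdlib Require Import Reals.
From Coquelicot Require Import Coquelicot.
Open Scope R_scope.

Definition convex_on (D : R -> Prop) (f : R -> R) : Prop :=
  forall a b t, D a -> D b -> 0 <= t <= 1 ->
    f (t * a + (1 - t) * b) <= t * f a + (1 - t) * f b.

Definition concave_on (D : R -> Prop) (f : R -> R) : Prop :=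
  forall a b t, D a -> D b -> 0 <= t <= 1 ->
    t * f a + (1 - t) * f b <= f (t * a + (1 - t) * b).

(* [S0plus tau dtau]: tau : [0,oo) -> R belongs to S_0^+ and dtau is its
   derivative tau' : dtau x = tau'(x) for x > 0, and
   dtau 0 = tau'(0) := lim_{x -> 0+} tau'(x).
   (Values of tau, dtau on (-oo,0) are irrelevant.) *)
Definition S0plus (tau dtau : R -> R) : Prop :=
  (forall x y, 0 <= x -> x <= y -> tau x <= tau y) /\
  convex_on (fun x => 0 <= x) tau /\
  (forall x, 0 < x -> is_derive tau x (dtau x)) /\
  concave_on (fun x => 0 < x) dtau /\
  filterlim dtau (at_right 0) (locally (dtau 0)) /\
  tau 0 = 0 /\
  (forall x, 0 < x -> 0 < dtau x).

(* Main.v *)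
Require Import Defs.
From Stdlib Require Import Reals Lra.
From Coquelicot Require Import Coquelicot.
Open Scope R_scope.

Lemma mono_d (tau dtau : R -> R) : S0plus tau dtau ->
  forall c b, 0 < c -> c <= b -> dtau c <= dtau b.
Proof.
  intros [_ [_ [_ [Hcc [_ [_ Hpos]]]]]] c b Hc Hcb.
  destruct (Rle_or_lt (dtau c) (dtau b)) as [H|H]; [exact H|exfalso].
  assert (Hb : 0 < b) by lra.
  pose proof (Hpos c Hc) as pc. pose proof (Hpos b Hb) as pb.
  set (t := (1 + dtau b / dtau c) / 2).
  assert (Hq : 0 < dtau b / dtau c < 1).
  { split. apply Rdiv_lt_0_compat; lra.
    apply (Rmult_lt_reg_r (dtau c)); [lra|].
    replace (dtau b / dtau c * dtau c) with (dtau b) by (field; lra). lra. }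
  assert (Ht : dtau b / dtau c < t < 1) by (unfold t; lra).
  set (d := (b - t * c) / (1 - t)).
  assert (Hd : b < d).
  { unfold d. apply (Rmult_lt_reg_r (1 - t)); [lra|].
    replace ((b - t * c) / (1 - t) * (1 - t)) with (b - t * c) by (field; lra).
    assert (c <> b) by (intro; subst; lra). nra. }
  pose proof (Hcc c d t Hc ltac:(lra) ltac:(lra)) as K.
  assert (E : t * c + (1 - t) * d = b) by (unfold d; field; lra).
  rewrite E in K.
  pose proof (Hpos d ltac:(lra)).
  assert (t * dtau c > dtau b).
  { assert (dtau b = (dtau b / dtau c) * dtau c) by (field; lra). nra. }
  nra.
Qed.

Lemma L1 (tau dtau : R -> R) : S0plus tau dtau ->
  forall a b, 0 <= a -> a <= b -> tau b - tau a <= (b - a) * dtau b.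
Proof.
  intros HS a b Ha Hab.
  destruct (Req_dec a b) as [->|Hne]; [lra|].
  assert (Hab' : a < b) by lra.
  pose proof HS as [_ [Hcv [Hder _]]].
  set (a' := (a + b) / 2).
  assert (Hconv : tau a' <= tau a + ((a' - a) / (b - a)) * (tau b - tau a)).
  { pose proof (Hcv b a (1/2) ltac:(simpl; lra) Ha ltac:(lra)) as K.
    replace (1/2 * b + (1 - 1/2) * a) with a' in K by (unfold a'; field).
    replace ((a' - a) / (b - a)) with (1/2) by (unfold a'; field; lra). lra. }
  destruct (MVT_gen tau a' b dtau) as [c [Hc Heq]].
  - intros z Hz. apply Hder. unfold a' in *. rewrite Rmin_left in Hz by lra. lra.
  - intros z Hz. rewrite Rmin_left in Hz by (unfold a'; lra).
    rewrite Rmax_right in Hz by (unfold a'; lra).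
    assert (Hz0 : 0 < z) by (unfold a' in *; lra).
    pose proof (proj1 (is_derive_Reals _ _ _) (Hder z Hz0)) as D.
    apply derivable_continuous_pt. exists (dtau z). exact D.
  - rewrite Rmin_left in Hc by (unfold a'; lra).
    rewrite Rmax_right in Hc by (unfold a'; lra).
    assert (dtau c <= dtau b) by (apply (mono_d tau dtau HS); unfold a' in *; lra).
    assert (Hd : 0 < dtau b) by (destruct HS as [_ [_ [_ [_ [_ [_ P]]]]]]; apply P; lra).
    assert (tau b - tau a' <= (b - a') * dtau b) by (rewrite Heq; unfold a' in *; nra).
    replace ((a' - a) / (b - a)) with (1/2) in Hconv by (unfold a'; field; lra).
    unfold a' in *. lra.
Qed.

Lemma ratio (tau dtau : R -> R) : S0plus tau dtau ->
  forall x y, 0 < x -> x < y -> x * dtau y <= y * dtau x.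
Proof.
  intros HS x y Hx Hxy.
  pose proof HS as [_ [_ [_ [Hcc [_ [_ Hpos]]]]]].
  assert (Key : forall e, 0 < e < x -> y * dtau x - x * dtau y >= e * (dtau x - dtau y)).
  { intros e He.
    set (t := (x - e) / (y - e)).
    pose proof (Hcc y e t ltac:(lra) ltac:(lra)) as K.
    assert (0 <= t <= 1).
    { unfold t; split. apply Rdiv_le_0_compat; lra.
      apply (Rmult_le_reg_r (y - e)); [lra|]. field_simplify; lra. }
    specialize (K H).
    replace (t * y + (1 - t) * e) with x in K by (unfold t; field; lra).
    pose proof (Hpos e ltac:(lra)).
    assert (t * dtau y <= dtau x) by nra.
    unfold t in H1.
    assert ((x - e) * dtau y <= (y - e) * dtau x).
    { apply (Rmult_le_compat_l (y - e)) in H1; [|lra].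
      replace ((y - e) * ((x - e) / (y - e) * dtau y)) with ((x - e) * dtau y) in H1
        by (field; lra). exact H1. }
    lra. }
  pose proof (Hpos x Hx). pose proof (Hpos y ltac:(lra)).
  destruct (Rle_or_lt (dtau y) (dtau x)) as [Hle|Hlt]; [nra|].
  destruct (Rle_or_lt 0 (y * dtau x - x * dtau y)) as [G|G]; [lra|exfalso].
  set (c := dtau y - dtau x).
  set (e := Rmin (x/2) (- (y * dtau x - x * dtau y) / (2 * c))).
  assert (He1 : e <= x/2) by apply Rmin_l.
  assert (He2 : e <= - (y * dtau x - x * dtau y) / (2 * c)) by apply Rmin_r.
  assert (Hep : 0 < e).
  { unfold e. apply Rmin_glb_lt. lra. apply Rdiv_lt_0_compat; unfold c; lra. }
  specialize (Key e ltac:(lra)).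
  assert (e * c <= - (y * dtau x - x * dtau y) / 2).
  { apply (Rmult_le_compat_r c) in He2; [|unfold c; lra].
    replace (- (y * dtau x - x * dtau y) / (2 * c) * c)
      with (- (y * dtau x - x * dtau y) / 2) in He2 by (field; unfold c; lra). exact He2. }
  unfold c in *. lra.
Qed.

Lemma d0_nonneg (tau dtau : R -> R) : S0plus tau dtau -> 0 <= dtau 0.
Proof.
  intros [_ [_ [_ [_ [Hlim [_ Hpos]]]]]].
  destruct (Rle_or_lt 0 (dtau 0)) as [H|H]; [exact H|exfalso].
  pose proof (proj1 (filterlim_locally dtau (dtau 0)) Hlim) as K.
  assert (Hp : 0 < - dtau 0 / 2) by lra.
  specialize (K (mkposreal _ Hp)).
  destruct K as [d Hd].
  assert (Hd2 : 0 < d / 2) by (destruct d; simpl; lra).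
  specialize (Hd (d / 2)).
  assert (B : ball 0 d (d/2)).
  { unfold ball; simpl; unfold AbsRing_ball, abs, minus, plus, opp; simpl.
    replace (d / 2 + - 0) with (d/2) by ring.
    rewrite Rabs_right by lra. destruct d; simpl in *; lra. }
  specialize (Hd B ltac:(lra)).
  pose proof (Hpos (d/2) Hd2).
  revert Hd. unfold ball; simpl; unfold AbsRing_ball, abs, minus, plus, opp; simpl.
  intro Hd. apply Rabs_def2 in Hd. lra.
Qed.

Theorem mainTheorem18 (tau dtau : R -> R) (x y : R) :
  S0plus tau dtau -> 0 <= x -> 0 <= y ->
  tau x + tau y <= tau (Rabs (x - y)) + 2 * y * dtau x.
Proof.
  intros HS Hx Hy.
  pose proof (d0_nonneg _ _ HS) as D0.
  pose proof HS as [_ [_ [_ [_ [_ [T0 Hpos]]]]]].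
  assert (Dnn : forall z, 0 <= z -> 0 <= dtau z).
  { intros z Hz. destruct (Req_dec z 0) as [->|]; [lra|]. left; apply Hpos; lra. }
  pose proof (Dnn x Hx).
  destruct (Rle_or_lt y x) as [Hyx|Hxy].
  - rewrite Rabs_right by lra.
    pose proof (L1 _ _ HS (x - y) x ltac:(lra) ltac:(lra)) as A.
    pose proof (L1 _ _ HS 0 y ltac:(lra) ltac:(lra)) as B.
    rewrite T0 in B.
    destruct (Req_dec y 0) as [->|Hy0]; [nra|].
    assert (dtau y <= dtau x) by (apply (mono_d _ _ HS); lra).
    nra.
  - rewrite Rabs_left by lra.
    pose proof (L1 _ _ HS (y - x) y ltac:(lra) ltac:(lra)) as A.
    replace (- (x - y)) with (y - x) by ring.
    replace (y - (y - x)) with x in A by ring.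
    destruct (Req_dec x 0) as [->|Hx0].
    + rewrite T0. nra.
    + pose proof (ratio _ _ HS x y ltac:(lra) Hxy).
      pose proof (L1 _ _ HS 0 x ltac:(lra) ltac:(lra)) as B.
      rewrite T0 in B. nra.
Qed.
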